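(* For every graph $G$ on $n\ge 1$ vertices, \[ \operatorname{rank}(A_G+I)\cdot \operatorname{rank}(A_{\overline{G}}+I)\ \ge\ n, \] with equality if and only if $G=K_n$ or $\overline{G}=K_n$.
   Context: All graphs are simple (undirected, no loops or multiple edges). $A_G$ denotes the $n\times n$ adjacency matrix of $G$, $\overline{G}$ the complement of $G$, $I=I_n$ the $n\times n$ identity matrix, and $\operatorname{rank}$ is the rank over $\mathbb{R}$. $K_n$ is the complete graph on $n$ vertices. *)

(* Defs.v *)
From mathcomp Require Import all_boot all_order all_algebra.
From mathcomp Require Import reals.
Set Implicit Arguments. Unset Strict Implicit. Unset Printing Implicit Defensive.
Import GRing.Theory Num.Theory.
Local Open Scope ring_scope.

Definition simple_graph (n : nat) (e : rel 'I_n) : Prop :=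
  (forall x, ~~ e x x) /\ (forall x y, e x y = e y x).

Definition compl_graph (n : nat) (e : rel 'I_n) : rel 'I_n :=
  fun x y => (x != y) && ~~ e x y.

Definition complete_graph (n : nat) : rel 'I_n := fun x y => x != y.

Definition adjmx (R : nzRingType) (n : nat) (e : rel 'I_n) : 'M[R]_n :=
  \matrix_(i, j) (e i j)%:R.
Arguments complete_graph : clear implicits.

(* Main.v *)
Require Import Defs.
From mathcomp Require Import all_boot all_order all_algebra.
From mathcomp Require Import reals.
From mathcomp Require Import zify ring lra.
Set Implicit Arguments. Unset Strict Implicit. Unset Printing Implicit Defensive.
Import Order.TTheory GRing.Theory Num.Theory.
Local Open Scope ring_scope.

Section Key.
Variables (R : realFieldType) (n : nat) (A B : 'M[R]_n).
Hypotheses (hAs : A^T = A) (hBs : B^T = B) (hM : A + B = const_mx 1 + 1%:M).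

Lemma qf_ker (x y : 'rV[R]_n) : x *m A = 0 ->
  (x + y) *m A *m (x + y)^T = y *m A *m y^T.
Proof.
move=> hx; rewrite mulmxDl hx add0r linearD /= mulmxDr.
by rewrite -(mulmxA y) -{1}hAs -trmx_mul hx trmx0 mulmx0 add0r.
Qed.

Lemma qf_M (y : 'rV[R]_n) : y *m B = 0 ->
  y *m A *m y^T = y *m (const_mx 1 + 1%:M) *m y^T.
Proof. by move=> hy; rewrite -hM mulmxDr hy addr0. Qed.

Lemma qfM_entry (y : 'rV[R]_n) :
  (y *m (const_mx 1 + 1%:M) *m y^T) 0 0 =
  (\sum_k y 0 k) ^+ 2 + \sum_k y 0 k ^+ 2.
Proof.
rewrite mulmxDr mulmx1 mulmxDl mxE [X in _ + X]mxE.
congr (_ + _); last by apply: eq_bigr => k _; rewrite mxE expr2.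
rewrite mxE expr2 mulr_suml; apply: eq_bigr => k _; rewrite !mxE mulrC.
congr (_ * _); by apply: eq_bigr => l _; rewrite mxE mulr1.
Qed.

Lemma qfM_eq0 (y : 'rV[R]_n) : y *m (const_mx 1 + 1%:M) *m y^T = 0 -> y = 0.
Proof.
move/matrixP/(_ 0 0); rewrite qfM_entry mxE => h0.
have hs : \sum_k y 0 k ^+ 2 = 0.
  apply/eqP; rewrite eq_le sumr_ge0 ?andbT; last by move=> k _; exact: sqr_ge0.
  by have := sqr_ge0 (\sum_k y 0 k); lra.
apply/rowP => k; rewrite mxE; apply/eqP; rewrite -sqrf_eq0; apply/eqP.
by move/eqP: hs; rewrite psumr_eq0 => [/allP/(_ k (mem_index_enum k))/implyP/(_ isT)/eqP|k' _]; [|exact: sqr_ge0].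
Qed.

Lemma decomp : (\rank A + \rank B <= n)%N ->
  forall z : 'rV[R]_n, exists x y, [/\ z = x + y, x *m A = 0 & y *m B = 0].
Proof.
move=> hr z.
set C := (kermx A :&: kermx B)%MS.
have C0 : C = 0.
  have hCA : C *m A = 0 by apply/sub_kermxP; exact: capmxSl.
  have hCB : C *m B = 0 by apply/sub_kermxP; exact: capmxSr.
  apply/row_matrixP => k; rewrite row0; apply: qfM_eq0.
  by rewrite -hM mulmxDr -!row_mul hCA hCB row0 addr0 mul0mx.
have hK : row_full (kermx A + kermx B)%MS.
  rewrite /row_full eqn_leq rank_leq_col /=.
  have := mxrank_sum_cap (kermx A) (kermx B).
  rewrite -/C C0 mxrank0 addn0 !mxrank_ker => ->.
  have := rank_leq_col A; have := rank_leq_col B; lia.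
have /sub_addsmxP [u hu] := submx_full z hK.
exists (u.1 *m kermx A), (u.2 *m kermx B).
by split => //; rewrite -mulmxA mulmx_ker mulmx0.
Qed.

Lemma qf_delta (i j : 'I_n) (z := delta_mx 0 i - delta_mx 0 j : 'rV[R]_n) :
  (z *m A *m z^T) 0 0 = A i i - A i j - A j i + A j j.
Proof.
rewrite /z mulmxBl -!rowE linearB /= !trmx_delta mulmxBr -!colE !mxE.
ring.
Qed.

Lemma row_eq (i j : 'I_n) : (\rank A + \rank B <= n)%N ->
  A i i = 1 -> A j j = 1 -> A i j = 1 -> A j i = 1 -> row i A = row j A.
Proof.
move=> hr hii hjj hij hji.
have [x [y [hz hx hy]]] := decomp hr (delta_mx 0 i - delta_mx 0 j).
move: (qf_delta i j) => /= hq; rewrite hz qf_ker // qf_M // hii hjj hij hji in hq.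
have y0 : y = 0.
  apply: qfM_eq0; apply/matrixP => a b; rewrite !ord1 hq mxE.
  by rewrite subrr sub0r addrC subrr.
move: hz; rewrite y0 addr0 => hz.
by apply/eqP; rewrite -subr_eq0 !rowE -mulmxBl hz hx.
Qed.
End Key.
Section G.
Variables (R : realFieldType) (n : nat).

Lemma AM_entry (e : rel 'I_n) : (forall x, ~~ e x x) -> forall i j,
  (adjmx R e + 1%:M) i j = ((i == j) || e i j)%:R.
Proof.
move=> irr i j; rewrite !mxE; case: eqVneq => [->|_].
  by rewrite (negbTE (irr j)) add0r.
by rewrite addr0 orFb.
Qed.

Lemma compl_simple (e : rel 'I_n) : simple_graph e -> simple_graph (compl_graph e).
Proof.
move=> [irr sym]; split => [x|x y]; first by rewrite /compl_graph eqxx.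
by rewrite /compl_graph eq_sym sym.
Qed.

Lemma natb_inj (b1 b2 : bool) : (b1%:R = b2%:R :> R) -> b1 = b2.
Proof. by case: b1; case: b2 => //= /eqP; rewrite ?oner_eq0 // eq_sym oner_eq0. Qed.

Lemma AM_pos (e : rel 'I_n) : (1 <= n)%N -> (forall x, ~~ e x x) ->
  (0 < \rank (adjmx R e + 1%:M)%R)%N.
Proof.
move=> hn irr; rewrite lt0n mxrank_eq0; apply/eqP => /matrixP/(_ (Ordinal hn) (Ordinal hn)).
by rewrite AM_entry // eqxx mxE /= => /eqP; rewrite oner_eq0.
Qed.

Lemma rank_sub (A : 'M[R]_n) (f : 'I_2 -> 'I_n) : (\rank (mxsub f f A) <= \rank A)%N.
Proof.
have -> : mxsub f f A = mxsub f f (A *m 1%:M) by rewrite mulmx1.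
rewrite mxsub_mul rowsubE.
apply: leq_trans (mxrankM_maxl _ _) _; exact: mxrankM_maxr.
Qed.

Lemma rank1_complete (e : rel 'I_n) : simple_graph e ->
  \rank (adjmx R e + 1%:M)%R = 1%N -> forall i j, i != j -> e i j.
Proof.
move=> [irr sym] hr i j hij; apply/negPn/negP => hn.
pose f (k : 'I_2) := if k == 0 then i else j.
have hs : mxsub f f (adjmx R e + 1%:M) = 1%:M.
  apply/matrixP => k l; rewrite mxE AM_entry // mxE /f.
  case: k => [[|[|k]] hk]; case: l => [[|[|l]] hl] //=.
  all: try by rewrite eqxx.
  all: try by rewrite (negbTE hij) (negbTE hn).
  all: try by rewrite eq_sym (negbTE hij) sym (negbTE hn).
have := rank_sub (adjmx R e + 1%:M) f; rewrite hs mxrank1 hr.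
by [].
Qed.

Lemma const_rank1 : (1 <= n)%N -> \rank (const_mx 1 : 'M[R]_n) = 1%N.
Proof.
move=> hn; apply/eqP; rewrite eqn_leq; apply/andP; split.
  have -> : (const_mx 1 : 'M[R]_n) = (const_mx 1 : 'cV[R]_n) *m (const_mx 1 : 'rV[R]_n).
    by apply/matrixP => i j; rewrite !mxE big_ord1 !mxE mulr1.
  apply: leq_trans (mxrankM_maxr _ _) _; exact: rank_leq_row.
rewrite lt0n mxrank_eq0; apply/eqP => /matrixP/(_ (Ordinal hn) (Ordinal hn)).
by rewrite !mxE => /eqP; rewrite oner_eq0.
Qed.

Lemma AM_complete (e : rel 'I_n) : (forall i j, i != j -> e i j) ->
  (forall x, ~~ e x x) -> adjmx R e + 1%:M = const_mx 1.
Proof.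
move=> h irr; apply/matrixP => i j; rewrite AM_entry // mxE.
by case: eqVneq => //= /h ->.
Qed.

Lemma AM_empty (e : rel 'I_n) : (forall i j, ~~ e i j) ->
  adjmx R e + 1%:M = 1%:M.
Proof.
move=> h; apply/matrixP => i j; rewrite AM_entry // [RHS]mxE.
by rewrite (negbTE (h i j)) orbF.
Qed.

End G.
Lemma comb (T : finType) (e : rel T) : (forall x, ~~ e x x) -> (forall x y, e x y = e y x) ->
  (forall i j, i != j -> e i j -> forall k, ((i == k) || e i k) = ((j == k) || e j k)) ->
  (forall i j, i != j -> ~~ e i j -> forall k, ((i == k) || ~~ e i k) = ((j == k) || ~~ e j k)) ->
  (forall i j, i != j -> e i j) \/ (forall i j, ~~ e i j).
Proof.
move=> irr sym RA RB.
case: (boolP [exists i, exists j, e i j]); last first.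
  move/existsPn => h; right => i j; exact: (existsPn (h i)).
move/existsP => [i /existsP [j hij]]; left.
have hji : i != j by apply/eqP => eji; move: hij; rewrite eji (negbTE (irr j)).
have hik : forall k, i != k -> e i k.
  move=> k hki; apply/negPn/negP => hn.
  have hkj : j != k by apply/eqP => ekj; move: hn; rewrite -ekj hij.
  have := RA i j hji hij k; rewrite (negbTE hn) (negbTE hki) /= => /esym/norP [_ njk].
  have h1 := RB i k hki hn j.
  have h2 := RB j k hkj njk j.
  rewrite eqxx /= in h2; rewrite -h2 (negbTE hji) hij in h1; by [].
move=> p q hpq.
case: (eqVneq p i) => [epi|hpi]; first by rewrite epi hik // -epi.
have hp : e i p by apply: hik; rewrite eq_sym.
have hip : i != p by rewrite eq_sym.
have := RA i p hip hp q.
have -> : (i == q) || e i q.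
  by case: (eqVneq i q) => //= hiq; rewrite hik.
by rewrite (negbTE hpq) /= => <-.
Qed.

Lemma row_entry (R : realFieldType) (n : nat) (M : 'M[R]_n) i k : row i M 0 k = M i k.
Proof. by rewrite mxE. Qed.

Lemma key (R : realFieldType) (n : nat) (e : rel 'I_n) : (1 <= n)%N -> simple_graph e ->
  (n < \rank (adjmx R e + 1%:M)%R + \rank (adjmx R (compl_graph e) + 1%:M)%R)%N.
Proof.
move=> hn hs; have [irr sym] := hs; have [irrc symc] := compl_simple hs.
rewrite ltnNge; apply/negP => hr.
have hAs : (adjmx R e + 1%:M)^T = adjmx R e + 1%:M.
  by apply/matrixP => i j; rewrite mxE !AM_entry // sym eq_sym.
have hBs : (adjmx R (compl_graph e) + 1%:M)^T = adjmx R (compl_graph e) + 1%:M.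
  by apply/matrixP => i j; rewrite mxE !AM_entry // symc eq_sym.
have hM : adjmx R e + 1%:M + (adjmx R (compl_graph e) + 1%:M) = const_mx 1 + 1%:M.
  apply/matrixP => i j; rewrite mxE !AM_entry // !mxE /compl_graph.
  case: eqVneq => //= _; by case: (e i j); rewrite ?addr0 ?add0r.
have hM' := hM; rewrite addrC in hM'.
have RA : forall i j, i != j -> e i j -> forall k, ((i == k) || e i k) = ((j == k) || e j k).
  move=> i j hij eij k; apply: (@natb_inj R).
  have := row_eq (i:=i) (j:=j) hAs hM hr; rewrite !AM_entry // !eqxx eij orbT sym eij orbT.
  move=> /(_ erefl erefl erefl erefl)/rowP/(_ k); by rewrite !row_entry !AM_entry.
have RB : forall i j, i != j -> ~~ e i j -> forall k, ((i == k) || ~~ e i k) = ((j == k) || ~~ e j k).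
  move=> i j hij eij k.
  have hc : forall a b, ((a == b) || ~~ e a b) = ((a == b) || compl_graph e a b).
    by move=> a b; rewrite /compl_graph; case: eqVneq.
  rewrite !hc; apply: (@natb_inj R).
  have hr' : (\rank (adjmx R (compl_graph e) + 1%:M)%R + \rank (adjmx R e + 1%:M)%R <= n)%N by lia.
  have := row_eq (i:=i) (j:=j) hBs hM' hr'; rewrite !AM_entry // !eqxx.
  have ecij : compl_graph e i j by rewrite /compl_graph hij eij.
  rewrite ecij orbT symc ecij orbT.
  move=> /(_ erefl erefl erefl erefl)/rowP/(_ k); by rewrite !row_entry !AM_entry.
case: (comb irr sym RA RB) => h.
  have hB : adjmx R (compl_graph e) + 1%:M = 1%:M.
    apply: AM_empty => i j; rewrite /compl_graph; case: eqVneq => //= hij.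
    by rewrite h.
  have := AM_pos R hn irr; move: hr; rewrite hB mxrank1; lia.
have hA : adjmx R e + 1%:M = 1%:M by apply: AM_empty.
have := AM_pos R hn irrc; move: hr; rewrite hA mxrank1; lia.
Qed.

Theorem theorem2p1 (R : realType) (n : nat) (e : rel 'I_n) :
  (1 <= n)%N -> simple_graph e ->
  (n <= \rank (adjmx R e + 1%:M)%R * \rank (adjmx R (compl_graph e) + 1%:M)%R)%N /\
  ((\rank (adjmx R e + 1%:M)%R * \rank (adjmx R (compl_graph e) + 1%:M)%R)%N = n <->
     (e =2 complete_graph n \/ compl_graph e =2 complete_graph n)).
Proof.
move=> hn hs; have [irr sym] := hs; have hsc := compl_simple hs.
have [irrc symc] := hsc.
have ha : (0 < \rank (adjmx R e + 1%:M)%R)%N := AM_pos R hn irr.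
have hb : (0 < \rank (adjmx R (compl_graph e) + 1%:M)%R)%N := AM_pos R hn irrc.
have hk : (n < \rank (adjmx R e + 1%:M)%R + \rank (adjmx R (compl_graph e) + 1%:M)%R)%N := key R hn hs.
split; first nia.
split.
  move=> heq.
  have [ha1|hb1] : (\rank (adjmx R e + 1%:M)%R = 1 \/ \rank (adjmx R (compl_graph e) + 1%:M)%R = 1)%N by nia.
    left => i j; rewrite /complete_graph; case: eqVneq => [->|hij] /=; first exact: negbTE.
    exact: (rank1_complete hs ha1).
  right => i j; rewrite /complete_graph; case: eqVneq => [->|hij] /=; first exact: negbTE.
  exact: (rank1_complete hsc hb1).
case=> h.
  have hA : adjmx R e + 1%:M = const_mx 1 by apply: AM_complete => // i j; rewrite h.
  have hB : adjmx R (compl_graph e) + 1%:M = 1%:M.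
    by apply: AM_empty => i j; rewrite /compl_graph h andbN.
  by rewrite hA hB const_rank1 // mxrank1 mul1n.
have hB : adjmx R (compl_graph e) + 1%:M = const_mx 1 by apply: AM_complete => // i j; rewrite h.
have hA : adjmx R e + 1%:M = 1%:M.
  apply: AM_empty => i j; case: (eqVneq i j) => [->|hij]; first exact: irr.
  by move: (h i j); rewrite /compl_graph /complete_graph hij /= => ->.
by rewrite hA hB const_rank1 // mxrank1 muln1.
Qed.
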